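(* Let $n$ be a positive integer that is coprime to $2\cdot 3$, a multiple of $5$, and not a multiple of $5^2$. Then it is impossible to place $n^2$ queens on $\mathbb{Z}_n^3$ without conflict.
   Context: A queen on $\mathbb{Z}_n^d$ (here $d=3$) can move any number of times by a vector $\mathbf{x}\in\{-1,0,1\}^d\setminus\{\mathbf{0}\}$ (coordinates modulo $n$). Queens occupy distinct fields; two queens at distinct fields $\mathbf{u},\mathbf{v}\in\mathbb{Z}_n^d$ are in conflict if $\mathbf{v}-\mathbf{u}=t\mathbf{x}$ for some $t\in\mathbb{Z}_n$ and some nonzero $\mathbf{x}\in\{-1,0,1\}^d$. A placement is without conflict if no two queens are in conflict. *)

(* Defs.v *)
From mathcomp Require Import all_boot all_algebra.
Set Implicit Arguments. Unset Strict Implicit. Unset Printing Implicit Defensive.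
Import GRing.Theory.
Local Open Scope ring_scope.

(* Fields of the board Z_n^3 : functions from 'I_3 to 'Z_n (use only with n > 1). *)
Definition field (n : nat) := {ffun 'I_3 -> 'Z_n}.

Definition is_dir (n : nat) (x : field n) : Prop :=
  (forall i, x i = 0 \/ x i = 1 \/ x i = -1) /\ (exists i, x i != 0).

Definition in_conflict (n : nat) (u v : field n) : Prop :=
  u <> v /\ exists (t : 'Z_n) (x : field n),
    is_dir x /\ forall i, v i - u i = t * x i.

Definition conflict_free (n : nat) (Q : {set field n}) : Prop :=
  forall u v, u \in Q -> v \in Q -> ~ in_conflict u v.

(* Main.v *)
Require Import Defs.
From mathcomp Require Import all_boot all_algebra ring.
Set Implicit Arguments. Unset Strict Implicit. Unset Printing Implicit Defensive.
Import GRing.Theory.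

Definition cz {R : pzRingType} (c : nat) : R :=
  if c == 0%N then 0%R else if c == 1%N then 1%R else (-1)%R.
Definition keyR {R : pzRingType} (f a b : nat) (x y z : R) : R * R :=
  match f with
  | 0 => (x - cz a * z, y - cz b * z)%R
  | 1 => (x - cz a * y, z)%R
  | _ => (y, z) end.
Definition fams : seq (nat * nat * nat) :=
  [:: (0,0,0); (0,0,1); (0,0,2); (0,1,0); (0,1,1); (0,1,2); (0,2,0); (0,2,1); (0,2,2);
      (1,0,0); (1,1,0); (1,2,0); (2,0,0)].
Definition keyi {R : pzRingType} (i : nat) (x y z : R) : R * R :=
  let: (f, a, b) := nth (0,0,0) fams i in keyR f a b x y z.
Definition tbl : seq (seq nat) := [::
  [:: 0; 0; 0; 0; 0; 1; 0; 3; 1; 4; 3; 4; 0; 2; 0; 4; 3; 4; 3; 0; 0; 0; 0; 1; 3];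
  [:: 0; 0; 0; 0; 0; 2; 2; 4; 0; 0; 0; 2; 0; 1; 0; 0; 1; 2; 0; 0; 0; 0; 4; 4; 0];
  [:: 0; 0; 0; 0; 0; 2; 2; 4; 0; 0; 1; 4; 3; 0; 0; 0; 1; 2; 0; 0; 4; 3; 1; 0; 0];
  [:: 2; 1; 2; 3; 4; 3; 2; 1; 0; 4; 0; 0; 0; 0; 0; 0; 0; 0; 0; 0; 0; 0; 0; 0; 0];
  [:: 3; 3; 2; 1; 0; 1; 2; 3; 4; 0; 0; 0; 0; 0; 0; 0; 0; 0; 0; 0; 0; 0; 0; 0; 0];
  [:: 4; 0; 0; 0; 0; 0; 0; 0; 0; 0; 0; 0; 0; 0; 0; 0; 0; 0; 0; 0; 0; 0; 0; 0; 0];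
  [:: 2; 0; 0; 0; 0; 0; 0; 0; 0; 0; 0; 0; 0; 0; 0; 0; 0; 0; 0; 0; 0; 0; 0; 0; 0];
  [:: 4; 0; 0; 0; 0; 0; 0; 0; 0; 0; 0; 0; 0; 0; 0; 0; 0; 0; 0; 0; 0; 0; 0; 0; 0];
  [:: 4; 0; 0; 0; 0; 0; 0; 0; 0; 0; 0; 0; 0; 0; 0; 0; 0; 0; 0; 0; 0; 0; 0; 0; 0];
  [:: 1; 0; 0; 0; 0; 0; 0; 0; 0; 0; 0; 0; 0; 0; 0; 0; 0; 0; 0; 0; 0; 0; 0; 0; 0];
  [:: 2; 0; 0; 0; 0; 0; 0; 0; 0; 0; 0; 0; 0; 0; 0; 0; 0; 0; 0; 0; 0; 0; 0; 0; 0];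
  [:: 2; 0; 0; 0; 0; 0; 0; 0; 0; 0; 0; 0; 0; 0; 0; 0; 0; 0; 0; 0; 0; 0; 0; 0; 0];
  [:: 1; 0; 0; 0; 0; 0; 0; 0; 0; 0; 0; 0; 0; 0; 0; 0; 0; 0; 0; 0; 0; 0; 0; 0; 0]
].
Definition lam (i : nat) (k : 'Z_5 * 'Z_5) : nat :=
  nth 0 (nth [::] tbl i) (5 * val k.1 + val k.2).

Lemma check (x y z : 'Z_5) :
  (\sum_(i < 13) lam i (keyi i x y z)) %% 5 = 0.
Proof.
rewrite !big_ord_recr big_ord0 /=.
move: x y z; do 3! case=> [[|[|[|[|[|?]]]]] ?].
all: by vm_compute.
Qed.
Lemma sum5 (G : nat -> nat) : \sum_(a : 'Z_5) G (val a) = G 0 + G 1 + G 2 + G 3 + G 4.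
Proof. by rewrite !big_ord_recr big_ord0 /=. Qed.
Lemma total : (\sum_(i < 13) \sum_(a : 'Z_5) \sum_(b : 'Z_5) lam i (a, b)) %% 5 = 1.
Proof.
rewrite -(big_mkord xpredT (fun i => \sum_(a : 'Z_5) \sum_(b : 'Z_5) lam i (a, b))).
under eq_bigr => i _.
  rewrite (sum5 (fun a => \sum_(b : 'Z_5) nth 0 (nth [::] tbl i) (5 * a + val b))).
  rewrite !(sum5 (fun b => nth 0 (nth [::] tbl i) (5 * _ + b))).
  over.
by rewrite unlock; vm_compute.
Qed.
Definition phi (n : nat) (x : 'Z_n) : 'Z_5 := ((val x)%:R)%R.

Lemma phiD n (Hn : 1 < n) (H5 : 5 %| n) (x y : 'Z_n) : phi (x + y)%R = (phi x + phi y)%R.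
Proof.
rewrite /phi -natrD; apply: ord_inj; rewrite !val_Zp_nat //=.
by rewrite modn_dvdm // Zp_cast.
Qed.

Lemma phiN n (Hn : 1 < n) (H5 : 5 %| n) (x : 'Z_n) : phi (- x)%R = (- phi x)%R.
Proof.
apply/eqP; rewrite -subr_eq0 opprK -phiD // addNr.
by rewrite /phi.
Qed.

Lemma phi_sub n (Hn : 1 < n) (H5 : 5 %| n) (x z : 'Z_n) c :
  phi (x - cz c * z)%R = (phi x - cz c * phi z)%R.
Proof.
rewrite /cz; case: eqP => _; first by rewrite !mul0r !subr0.
case: eqP => _; first by rewrite !mul1r phiD // phiN.
by rewrite !mulN1r !opprK phiD.
Qed.

Lemma phi_key n (Hn : 1 < n) (H5 : 5 %| n) i (x y z : 'Z_n) :
  (phi (keyi i x y z).1, phi (keyi i x y z).2) = keyi i (phi x) (phi y) (phi z).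
Proof.
rewrite /keyi; case: (nth _ _ _) => [[f a] b]; case: f => [|[|f]] /=;
by rewrite ?phi_sub.
Qed.

Lemma cnt_nat m a : a < 5 -> \sum_(0 <= k < m * 5 | k %% 5 == a) 1 = m.
Proof.
move=> Ha; elim: m => [|m IH]; first by rewrite big_geq.
rewrite mulSnr (big_cat_nat _ (leq_addr _ _)) //= IH.
rewrite -{1}(add0n (m * 5)) big_addn addKn.
rewrite (eq_bigl (fun i => i %% 5 == a)); last by move=> i; rewrite /= addnC modnMDl.
suff -> : (\sum_(0 <= i < 5 | i %% 5 == a) 1) = 1 by rewrite addn1. clear IH.
by case: a Ha => [|[|[|[|[|//]]]]] _; rewrite unlock.
Qed.

Lemma cnt n (Hn : 1 < n) (H5 : 5 %| n) (a : 'Z_5) :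
  \sum_(k : 'Z_n | phi k == a) 1 = n %/ 5.
Proof.
rewrite (eq_bigl (fun k : 'Z_n => nat_of_ord k %% 5 == nat_of_ord a)); last first.
  move=> k /=; rewrite -(inj_eq (@ord_inj _)) /phi val_Zp_nat //.
rewrite -(big_mkord (fun k => k %% 5 == nat_of_ord a) (fun _ => 1)).
rewrite Zp_cast // -{1}(divnK H5) cnt_nat //.
Qed.

Lemma fiber n (Hn : 1 < n) (H5 : 5 %| n) (h : 'Z_5 -> nat) :
  \sum_(k : 'Z_n) h (phi k) = n %/ 5 * \sum_(a : 'Z_5) h a.
Proof.
rewrite (partition_big (@phi n) xpredT) //= big_distrr /=.
apply: eq_bigr => a _.
rewrite (eq_bigr (fun _ => h a * 1)); last by move=> k /eqP ->; rewrite muln1.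
by rewrite -big_distrr /= cnt // mulnC.
Qed.

Lemma sum_key n (Hn : 1 < n) (H5 : 5 %| n) (Q : {set field n})
  (K : field n -> 'Z_n * 'Z_n) (g : 'Z_5 * 'Z_5 -> nat) :
  #|Q| = n ^ 2 -> {in Q &, injective K} ->
  \sum_(q in Q) g (phi (K q).1, phi (K q).2) =
  n %/ 5 * (n %/ 5 * \sum_(a : 'Z_5) \sum_(b : 'Z_5) g (a, b)).
Proof.
move=> HQ inj.
rewrite -(big_imset (fun k => g (phi k.1, phi k.2)) inj) /=.
have -> : K @: Q = setT.
  apply/eqP; rewrite eqEcard subsetT cardsT card_prod card_in_imset // HQ.
  by rewrite /= card_ord Zp_cast // mulnn.
transitivity (\sum_(j : 'Z_n * 'Z_n) g (phi j.1, phi j.2)).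
  by apply: eq_bigl => k; rewrite in_setT.
rewrite -(pair_big xpredT xpredT (fun a b => g (phi a, phi b))) /=.
under eq_bigr => i _ do rewrite (fiber Hn H5 (fun b => g (phi i, b))).
rewrite -big_distrr /= (fiber Hn H5 (fun a => \sum_(b : 'Z_5) g (a, b))).
by [].
Qed.

Definition i0 : 'I_3 := @Ordinal 3 0 isT.
Definition i1 : 'I_3 := @Ordinal 3 1 isT.
Definition i2 : 'I_3 := @Ordinal 3 2 isT.

Lemma ord3_cases (j : 'I_3) : j = i0 \/ j = i1 \/ j = i2.
Proof.
case: j => [[|[|[|//]]] Hj]; [left | right; left | right; right]; exact: val_inj.
Qed.

Definition mkdir n (a b c : 'Z_n) : field n :=
  [ffun j : 'I_3 => if nat_of_ord j == 0 then a else if nat_of_ord j == 1 then b else c].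

Lemma cz_cases (R : pzRingType) c : (cz c : R) = 0%R \/ (cz c : R) = 1%R \/ (cz c : R) = (-1)%R.
Proof. by rewrite /cz; case: eqP => _; [left | case: eqP => _; [right; left | right; right]]. Qed.

Definition ent n (x : 'Z_n) := x = 0%R \/ x = 1%R \/ x = (-1)%R.

Lemma mkdir_dir n (a b c : 'Z_n) : ent a -> ent b -> ent c ->
  (exists j : 'I_3, mkdir a b c j != 0%R) -> is_dir (mkdir a b c).
Proof.
move=> Ha Hb Hc Hj; split => // j; case: (ord3_cases j) => [->|[->|->]]; by rewrite ffunE.
Qed.

Definition keyq n (i : nat) (q : field n) := keyi i (q i0) (q i1) (q i2).

Lemma key_inj n (Hn : 1 < n) (Q : {set field n}) i :
  conflict_free Q -> {in Q &, injective (keyq i)}.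
Proof.
move=> CF q q' Hq Hq' E.
have conf : forall d t, is_dir d -> (forall j, q' j - q j = t * d j)%R -> q = q'.
  move=> d t Hd Ht; case: (q =P q') => // Hne; case: (CF q q' Hq Hq'); split => //.
  by exists t, d.
have o1 : (1%R : 'Z_n) != 0%R := oner_neq0 _.
have e0 : ent (0%R : 'Z_n) by left.
have e1 : ent (1%R : 'Z_n) by right; left.
move: E; rewrite /keyq /keyi; case: (nth _ _ _) => [[f a] b].
case: f => [|[|f]] E.
- have E1 : (q i0 - cz a * q i2 = q' i0 - cz a * q' i2)%R := congr1 fst E.
  have E2 : (q i1 - cz b * q i2 = q' i1 - cz b * q' i2)%R := congr1 snd E.
  apply: (conf (mkdir (cz a) (cz b) 1%R) (q' i2 - q i2)%R).
    by apply: mkdir_dir => //; [apply: cz_cases | apply: cz_cases | exists i2; rewrite ffunE].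
  move=> j; case: (ord3_cases j) => [->|[->|->]]; rewrite ffunE /=.
  + have -> : q' i0 = (q i0 - cz a * q i2 + cz a * q' i2)%R by rewrite E1 subrK.
    ring.
  + have -> : q' i1 = (q i1 - cz b * q i2 + cz b * q' i2)%R by rewrite E2 subrK.
    ring.
  + by rewrite mulr1.
- have E1 : (q i0 - cz a * q i1 = q' i0 - cz a * q' i1)%R := congr1 fst E.
  have E2 : q i2 = q' i2 := congr1 snd E.
  apply: (conf (mkdir (cz a) 1%R 0%R) (q' i1 - q i1)%R).
    by apply: mkdir_dir => //; [apply: cz_cases | exists i1; rewrite ffunE].
  move=> j; case: (ord3_cases j) => [->|[->|->]]; rewrite ffunE /=.
  + have -> : q' i0 = (q i0 - cz a * q i1 + cz a * q' i1)%R by rewrite E1 subrK.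
    ring.
  + by rewrite mulr1.
  + by rewrite E2 subrr mulr0.
- have E1 : q i1 = q' i1 := congr1 fst E.
  have E2 : q i2 = q' i2 := congr1 snd E.
  apply: (conf (mkdir 1%R 0%R 0%R) (q' i0 - q i0)%R).
    by apply: mkdir_dir => //; exists i0; rewrite ffunE.
  move=> j; case: (ord3_cases j) => [->|[->|->]]; rewrite ffunE /=.
  + by rewrite mulr1.
  + by rewrite E1 subrr mulr0.
  + by rewrite E2 subrr mulr0.
Qed.

Theorem mainTheorem8 (n : nat) :
  0 < n -> coprime n 6 -> 5 %| n -> ~~ (25 %| n) ->
  ~ exists Q : {set field n}, #|Q| = n ^ 2 /\ conflict_free Q.
Proof.
move=> Hn0 _ H5 H25 [Q [HQ CF]].
have Hn : 1 < n := leq_trans (isT : 1 < 5) (dvdn_leq Hn0 H5).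
set S := \sum_(q in Q) \sum_(i < 13) lam i (keyi i (phi (q i0)) (phi (q i1)) (phi (q i2))).
have HS1 : 5 %| S.
  by apply: dvdn_sum => q _; rewrite /dvdn check.
have HS2 : S = n %/ 5 * (n %/ 5 *
    \sum_(i < 13) \sum_(a : 'Z_5) \sum_(b : 'Z_5) lam i (a, b)).
  rewrite /S exchange_big /= !big_distrr /=; apply: eq_bigr => i _.
  rewrite -(sum_key Hn H5 (fun k => lam i k) HQ (@key_inj n Hn Q i CF)).
  by apply: eq_bigr => q _; rewrite /keyq phi_key.
have Hm : ~~ (5 %| n %/ 5).
  apply: contra H25 => /(dvdn_mul (dvdnn 5)).
  by rewrite [5 * (n %/ 5)]mulnC divnK.
move: HS1; rewrite HS2 !Euclid_dvdM // (negbTE Hm) /=.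
by rewrite /dvdn total.
Qed.
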